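(* Let $AP=\{p\}$. For $n\ge1$ let $\mathcal{T}_n$ be the Kripke tree over $AP$ consisting of an infinite main path $\pi(0)\pi(1)\cdots$ from the root, all labelled $\emptyset$, such that $\pi(n+1)$ has exactly one child (namely $\pi(n+2)$), and every $\pi(i)$ with $i\ne n+1$ has exactly two children, $\pi(i+1)$ and a node $w_i$, where the subtree rooted at $w_i$ is a single infinite path whose labels are $\{p\},\emptyset,\emptyset,\emptyset,\dots$. Then for every $n\ge1$ and every CCTL$^*$ state formula $\varphi$ over $AP$ with $|\varphi|\le n$, we have $\mathcal{T}_n\models\varphi$ if and only if $\mathcal{T}_{n+1}\models\varphi$.
   Context: A Kripke tree over $AP$ is a non-blocking tree (nonempty prefix-closed set of words over some set of directions, every node having a child) with a labelling of nodes by subsets of $AP$; an infinite path starting at $w$ is a sequence of nodes $\pi(0)=w,\pi(1),\dots$ with each $\pi(k+1)$ a child of $\pi(k)$. CCTL$^*$: state formulas $\varphi::=\top\mid p\mid\neg\varphi\mid\varphi\wedge\varphi\mid\mathsf{E}\psi\mid\mathsf{D}^k\varphi$ ($k\ge1$), path formulas $\psi::=\varphi\mid\neg\psi\mid\psi\wedge\psi\mid\mathsf{X}\psi\mid\psi\mathsf{U}\psi$. $(\mathcal{T},w)\models p$ iff $p\in\mathit{Lab}(w)$; $(\mathcal{T},w)\models\mathsf{E}\psi$ iff $(\mathcal{T},\pi,0)\models\psi$ for some infinite path $\pi$ starting at $w$; $(\mathcal{T},w)\models\mathsf{D}^k\varphi$ iff at least $k$ distinct children of $w$ satisfy $\varphi$;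 $(\mathcal{T},\pi,i)\models\varphi$ iff $(\mathcal{T},\pi(i))\models\varphi$; $(\mathcal{T},\pi,i)\models\mathsf{X}\psi$ iff $(\mathcal{T},\pi,i+1)\models\psi$; $(\mathcal{T},\pi,i)\models\psi_1\mathsf{U}\psi_2$ iff for some $j\ge i$, $(\mathcal{T},\pi,j)\models\psi_2$ and $(\mathcal{T},\pi,k)\models\psi_1$ for $i\le k<j$; Booleans standard. $\mathcal{T}\models\varphi$ means $(\mathcal{T},\varepsilon)\models\varphi$. $|\varphi|$ denotes the length (size) of the formula $\varphi$, i.e. its number of symbols, so that proper subformulas are strictly shorter. *)

(* Defs.v *)
From Stdlib Require Import List Arith Lia.
Import ListNotations.
Set Implicit Arguments.

Record KTree (AP : Type) := {
  Dir  : Type;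
  node : list Dir -> Prop;
  lab  : list Dir -> AP -> Prop
}.
Arguments Dir {AP}.
Arguments node {AP}.
Arguments lab {AP}.

Definition is_kripke_tree {AP} (T : KTree AP) : Prop :=
  node T [] /\
  (forall u v, node T (u ++ v) -> node T u) /\
  (forall w, node T w -> exists d, node T (w ++ [d])).

Inductive sform (AP : Type) : Type :=
  | STrue : sform AP
  | SAtom : AP -> sform AP
  | SNot  : sform AP -> sform AP
  | SAnd  : sform AP -> sform AP -> sform AP
  | SE    : pform AP -> sform AP
  | SD    : nat -> sform AP -> sform AP
with pform (AP : Type) : Type :=
  | PState : sform AP -> pform AP
  | PNot   : pform AP -> pform AP
  | PAnd   : pform AP -> pform AP -> pform AP
  | PX     : pform AP -> pform AP
  | PU     : pform AP -> pform AP -> pform AP.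
Arguments STrue {AP}.

Fixpoint wf_s {AP} (f : sform AP) : Prop :=
  match f with
  | STrue | SAtom _ => True
  | SNot g => wf_s g
  | SAnd g h => wf_s g /\ wf_s h
  | SE p => wf_p p
  | SD k g => 1 <= k /\ wf_s g
  end
with wf_p {AP} (p : pform AP) : Prop :=
  match p with
  | PState f => wf_s f
  | PNot q => wf_p q
  | PAnd q r => wf_p q /\ wf_p r
  | PX q => wf_p q
  | PU q r => wf_p q /\ wf_p r
  end.

(* Length (number of symbols) of a formula; D^k is one symbol,
   the embedding of state formulas into path formulas is not a symbol. *)
Fixpoint size_s {AP} (f : sform AP) : nat :=
  match f with
  | STrue | SAtom _ => 1
  | SNot g => S (size_s g)
  | SAnd g h => S (size_s g + size_s h)
  | SE p => S (size_p p)
  | SD _ g => S (size_s g)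
  end
with size_p {AP} (p : pform AP) : nat :=
  match p with
  | PState f => size_s f
  | PNot q => S (size_p q)
  | PAnd q r => S (size_p q + size_p r)
  | PX q => S (size_p q)
  | PU q r => S (size_p q + size_p r)
  end.

Definition is_path {AP} (T : KTree AP) (w : list (Dir T)) (pi : nat -> list (Dir T)) : Prop :=
  pi 0 = w /\ forall k, exists d, pi (S k) = pi k ++ [d] /\ node T (pi (S k)).

Fixpoint sat_s {AP} (T : KTree AP) (w : list (Dir T)) (f : sform AP) : Prop :=
  match f with
  | STrue => True
  | SAtom a => lab T w a
  | SNot g => ~ sat_s T w g
  | SAnd g h => sat_s T w g /\ sat_s T w h
  | SE p => exists pi, is_path T w pi /\ sat_p T pi 0 p
  | SD k g => exists ds : list (Dir T),
      NoDup ds /\ length ds = k /\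
      forall d, In d ds -> node T (w ++ [d]) /\ sat_s T (w ++ [d]) g
  end
with sat_p {AP} (T : KTree AP) (pi : nat -> list (Dir T)) (i : nat) (p : pform AP) : Prop :=
  match p with
  | PState f => sat_s T (pi i) f
  | PNot q => ~ sat_p T pi i q
  | PAnd q r => sat_p T pi i q /\ sat_p T pi i r
  | PX q => sat_p T pi (S i) q
  | PU q r => exists j, i <= j /\ sat_p T pi j r /\
                forall k, i <= k < j -> sat_p T pi k q
  end.

Definition models {AP} (T : KTree AP) (f : sform AP) : Prop := sat_s T [] f.

(* The trees T_n over AP = {p} (AP := unit, p := tt), directions bool.
   Main path pi(i) = repeat false i.  For i <> n+1, pi(i) has the extra
   child w_i = pi(i) ++ [true], whose subtree is the single path
   w_i ++ repeat false k. *)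
Definition Tn_node (n : nat) (w : list bool) : Prop :=
  (exists i, w = repeat false i) \/
  (exists i k, i <> S n /\ w = repeat false i ++ true :: repeat false k).

Definition Tn_lab (n : nat) (w : list bool) (_ : unit) : Prop :=
  exists i, i <> S n /\ w = repeat false i ++ [true].

Definition Tn (n : nat) : KTree unit :=
  {| Dir := bool; node := Tn_node n; lab := Tn_lab n |}.

(* Main.v *)
Require Import Defs.
From Stdlib Require Import List Arith Lia.
Import ListNotations.

Inductive cl := CM (z : nat) | CN | CO0 | CO1.

Definition step (c : cl) (d : bool) : option cl :=
  match c, d with
  | CM (S z), false => Some (CM z)
  | CM 0, false => Some CN
  | CM (S _), true => Some CO0
  | CM 0, true => None
  | CN, false => Some CN
  | CN, true => Some CO0
  | CO0, false => Some CO1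
  | CO0, true => None
  | CO1, false => Some CO1
  | CO1, true => None
  end.

Definition cls (n : nat) (w : list bool) : cl :=
  if existsb (fun b => b) w then (if last w false then CO0 else CO1)
  else if length w <=? S n then CM (S n - length w) else CN.

Lemma existsb_repeat_false i : existsb (fun b => b) (repeat false i) = false.
Proof. induction i; simpl; auto. Qed.

Lemma cls_main n i : cls n (repeat false i) = if i <=? S n then CM (S n - i) else CN.
Proof. unfold cls. rewrite existsb_repeat_false, repeat_length. reflexivity. Qed.

Lemma repeat_S_app (i : nat) : repeat false (S i) = repeat false i ++ [false].
Proof. induction i as [|i IH]; [reflexivity|]. change (false :: repeat false (S i) = (false :: repeat false i) ++ [false]).
  rewrite IH. reflexivity. Qed.

Lemma cls_off n i k : cls n (repeat false i ++ true :: repeat false k) =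
  match k with 0 => CO0 | S _ => CO1 end.
Proof.
  unfold cls. rewrite existsb_app. simpl. rewrite Bool.orb_true_r.
  destruct k.
  - rewrite last_last. reflexivity.
  - rewrite repeat_S_app. rewrite app_comm_cons, app_assoc, last_last. reflexivity.
Qed.

Lemma cls_off0 n i : cls n (repeat false i ++ [true]) = CO0.
Proof. exact (cls_off n i 0). Qed.

Lemma notin_true j : ~ In true (repeat false j).
Proof. intro H; apply repeat_spec in H; discriminate. Qed.

Lemma off_inj : forall i i' l l', repeat false i ++ true :: l = repeat false i' ++ true :: l' ->
  i = i' /\ l = l'.
Proof.
  induction i as [|i IH]; intros [|i'] l l' E; simpl in E.
  - injection E as E; auto.
  - discriminate.
  - discriminate.
  - injection E as E. destruct (IH _ _ _ E). split; auto.
Qed.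

Lemma main_not_off j i l : repeat false j = repeat false i ++ true :: l -> False.
Proof. intros E. apply (notin_true j). rewrite E. apply in_or_app. right. left. auto. Qed.

Lemma child n w d : Tn_node n w ->
  (Tn_node n (w ++ [d]) <-> step (cls n w) d <> None) /\
  (Tn_node n (w ++ [d]) -> step (cls n w) d = Some (cls n (w ++ [d]))).
Proof.
  intros [[i ->] | [i [k [Hi ->]]]].
  - rewrite cls_main. destruct d.
    + assert (Hn : Tn_node n (repeat false i ++ [true]) <-> i <> S n).
      { split.
        - intros [[j Ej] | [i' [k [Hi' Ek]]]].
          + exfalso. eapply main_not_off. symmetry. exact Ej.
          + destruct (off_inj _ _ _ _ Ek). subst; auto.
        - intros Hi. right. exists i, 0. split; auto. }
      rewrite Hn, cls_off0.
      destruct (lt_eq_lt_dec i (S n)) as [[Hlt|Heq]|Hgt].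
      * assert (E: (i <=? S n) = true) by (apply Nat.leb_le; lia). rewrite E.
        replace (S n - i) with (S (n - i)) by lia. simpl.
        split; [split; intros; [discriminate|lia] | auto].
      * subst. rewrite Nat.leb_refl, Nat.sub_diag. simpl. split; [tauto| intros; tauto].
      * assert (E: (i <=? S n) = false) by (apply Nat.leb_gt; lia). rewrite E. simpl.
        split; [split; intros; [discriminate|lia] | auto].
    + rewrite <- repeat_S_app. rewrite cls_main.
      assert (Hn : Tn_node n (repeat false (S i))) by (left; exists (S i); auto).
      destruct (lt_eq_lt_dec i (S n)) as [[Hlt|Heq]|Hgt].
      * assert (E: (i <=? S n) = true) by (apply Nat.leb_le; lia). rewrite E.
        assert (E2: (S i <=? S n) = true) by (apply Nat.leb_le; lia). rewrite E2.
        replace (S n - i) with (S (n - i)) by lia. simpl.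
        split; [split; intros; [discriminate|auto] | auto].
      * subst. rewrite Nat.leb_refl, Nat.sub_diag.
        assert (E2: (S (S n) <=? S n) = false) by (apply Nat.leb_gt; lia). rewrite E2. simpl.
        split; [split; intros; [discriminate|auto] | auto].
      * assert (E: (i <=? S n) = false) by (apply Nat.leb_gt; lia). rewrite E.
        assert (E2: (S i <=? S n) = false) by (apply Nat.leb_gt; lia). rewrite E2. simpl.
        split; [split; intros; [discriminate|auto] | auto].
  - rewrite cls_off. destruct d.
    + assert (Hn : ~ Tn_node n ((repeat false i ++ true :: repeat false k) ++ [true])).
      { rewrite <- app_assoc. simpl.
        intros [[j Ej] | [i' [k' [_ Ek]]]].
        - eapply main_not_off. symmetry. exact Ej.
        - destruct (off_inj _ _ _ _ Ek) as [_ E2].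
          apply (notin_true k'). rewrite <- E2. apply in_or_app. right. left. auto. }
      split; [split; [intros; contradiction| destruct k; simpl; tauto] | intros; contradiction].
    + assert (E : (repeat false i ++ true :: repeat false k) ++ [false] =
                  repeat false i ++ true :: repeat false (S k)).
      { rewrite repeat_S_app, <- app_assoc. reflexivity. }
      rewrite E, cls_off.
      assert (Hn : Tn_node n (repeat false i ++ true :: repeat false (S k))).
      { right. exists i, (S k). auto. }
      destruct k; simpl; split; try split; intros; auto; discriminate.
Qed.

Lemma lab_cls n w : Tn_node n w -> (Tn_lab n w tt <-> cls n w = CO0).
Proof.
  intros [[i ->] | [i [k [Hi ->]]]].
  - rewrite cls_main. split.
    + intros [i' [_ E]]. exfalso. eapply main_not_off. exact E.
    + destruct (i <=? S n); discriminate.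
  - rewrite cls_off. destruct k.
    + split; auto. intros _. exists i. split; auto.
    + split; [|discriminate]. intros [i' [_ E]].
      destruct (off_inj _ _ _ _ E) as [_ E2]. discriminate.
Qed.

Lemma root_node n : Tn_node n [].
Proof. left. exists 0. reflexivity. Qed.

Lemma root_cls n : cls n [] = CM (S n).
Proof. reflexivity. Qed.

Fixpoint cseq (c0 : cl) (g : nat -> bool) (k : nat) : cl :=
  match k with
  | 0 => c0
  | S k => match step (cseq c0 g k) (g k) with Some c => c | None => CO1 end
  end.
Definition valid c0 g := forall k, step (cseq c0 g k) (g k) <> None.

Definition high (H : nat) (c : cl) : Prop := exists z, c = CM z /\ H <= S z.
Definition Rel (H xi : nat) (c c' : nat -> cl) (i i' : nat) : Prop :=
  exists p p', (forall j, j < p -> high H (c (i + j))) /\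
               (forall j, j < p' -> high H (c' (i' + j))) /\
               (forall k, c (i + p + k) = c' (i' + p' + k)) /\
               (p = p' \/ (xi < p /\ xi < p')).

Lemma Rel_sym H xi c c' i i' : Rel H xi c c' i i' -> Rel H xi c' c i' i.
Proof. intros [p [p' [A [B [C D]]]]]. exists p', p. repeat split; auto. intros; auto. lia. Qed.

Lemma Rel_mono H x1 x2 c c' i i' : x1 <= x2 -> Rel H x2 c c' i i' -> Rel H x1 c c' i i'.
Proof. intros L [p [p' [A [B [C D]]]]]. exists p, p'. repeat split; auto. lia. Qed.

Lemma Rel_ext H xi c1 c2 c1' c2' i i' : (forall k, c1 k = c2 k) -> (forall k, c1' k = c2' k) ->
  Rel H xi c1 c1' i i' -> Rel H xi c2 c2' i i'.
Proof. intros E E' [p [p' [A [B [C D]]]]]. exists p, p'. repeat split; auto.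
  - intros j Hj. rewrite <- E. auto.
  - intros j Hj. rewrite <- E'. auto.
  - intros k. rewrite <- E, <- E'. auto.
Qed.

Definition Cc xi p p' d d' :=
  (d <= p /\ d' <= p' /\ (p - d = p' - d' \/ (xi < p - d /\ xi < p' - d'))) \/
  (p <= d /\ p' <= d' /\ d - p = d' - p').

Lemma Rel_move H xi c c' i i' p p' d d' :
  (forall j, j < p -> high H (c (i + j))) ->
  (forall j, j < p' -> high H (c' (i' + j))) ->
  (forall k, c (i + p + k) = c' (i' + p' + k)) ->
  Cc xi p p' d d' -> Rel H xi c c' (i + d) (i' + d').
Proof.
  intros A B C [[D1 [D2 D3]] | [D1 [D2 D3]]].
  - exists (p - d), (p' - d'). repeat split.
    + intros j Hj. replace (i + d + j) with (i + (d + j)) by lia. apply A. lia.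
    + intros j Hj. replace (i' + d' + j) with (i' + (d' + j)) by lia. apply B. lia.
    + intros k. replace (i + d + (p - d) + k) with (i + p + k) by lia.
      replace (i' + d' + (p' - d') + k) with (i' + p' + k) by lia. auto.
    + exact D3.
  - exists 0, 0. repeat split; try (intros; lia).
    intros k. replace (i + d + 0 + k) with (i + p + (d - p + k)) by lia.
    replace (i' + d' + 0 + k) with (i' + p' + (d - p + k)) by lia. auto.
Qed.

Lemma U_arith xi p p' d : (p = p' \/ (xi < p /\ xi < p')) ->
  exists d', Cc xi p p' d d' /\ forall k', k' < d' -> exists k, k < d /\ Cc xi p p' k k'.
Proof.
  intros [<- | [Hp Hp']].
  - exists d. split.
    + unfold Cc; lia.
    + intros k' Hk. exists k'. split; auto. unfold Cc; lia.
  - destruct (le_lt_dec p d).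
    + exists (p' + (d - p)). split; [unfold Cc; lia|]. intros k' Hk.
      destruct (le_lt_dec p' k').
      * exists (p + (k' - p')). unfold Cc; lia.
      * destruct (le_lt_dec (p' - k') p).
        -- exists (p - (p' - k')). unfold Cc; lia.
        -- exists 0. unfold Cc; lia.
    + destruct d as [|d0].
      * exists 0. split; [unfold Cc; lia|]. intros; lia.
      * destruct (le_lt_dec (p - S d0) p').
        -- exists (p' - (p - S d0)). split; [unfold Cc; lia|]. intros k' Hk.
           destruct (le_lt_dec (p' - k') p).
           ++ exists (p - (p' - k')). unfold Cc; lia.
           ++ exists 0. unfold Cc; lia.
        -- exists 0. split; [unfold Cc; lia|]. intros; lia.
Qed.

Lemma Rel_X H xi c c' i i' : Rel H (S xi) c c' i i' -> Rel H xi c c' (S i) (S i').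
Proof.
  intros [p [p' [A [B [C D]]]]].
  replace (S i) with (i + 1) by lia. replace (S i') with (i' + 1) by lia.
  apply (Rel_move H xi c c' i i' p p' 1 1 A B C). unfold Cc; lia.
Qed.

Fixpoint xd (p : pform unit) : nat :=
  match p with
  | PState _ => 0 | PNot q => xd q | PAnd q r => Nat.max (xd q) (xd r)
  | PX q => S (xd q) | PU q r => Nat.max (xd q) (xd r) end.
Fixpoint hm (p : pform unit) : nat :=
  match p with
  | PState f => size_s f | PNot q => hm q | PAnd q r => Nat.max (hm q) (hm r)
  | PX q => hm q | PU q r => Nat.max (hm q) (hm r) end.

Lemma size_s_pos (f : sform unit) : 1 <= size_s f.
Proof. destruct f; simpl; lia. Qed.

Lemma xd_hm p : xd p + hm p <= size_p p.
Proof. induction p; simpl; try lia. Qed.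

Lemma hm_pos p : 1 <= hm p.
Proof. induction p; simpl; try lia. apply size_s_pos. Qed.

Definition simil s c c' := c = c' \/ exists z z', c = CM z /\ c' = CM z' /\ s <= S z /\ s <= S z'.

Lemma simil_sym s c c' : simil s c c' -> simil s c' c.
Proof. intros [E|[z [z' [A [B [C D]]]]]]; [left; auto|right; exists z', z; auto]. Qed.

Lemma simil_mono s1 s2 c c' : s1 <= s2 -> simil s2 c c' -> simil s1 c c'.
Proof. intros L [E|[z [z' [A [B [C D]]]]]]; [left; auto|right; exists z, z'; repeat split; auto; lia]. Qed.

Definition Q (f : sform unit) : Prop :=
  forall a b (u v : list bool), Tn_node a u -> Tn_node b v -> simil (size_s f) (cls a u) (cls b v) ->
  (sat_s (Tn a) u f <-> sat_s (Tn b) v f).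

Lemma path_lemma H (IH : forall f, size_s f <= H -> Q f) a b (pi pi' : nat -> list bool)
  (Hn : forall k, Tn_node a (pi k)) (Hn' : forall k, Tn_node b (pi' k)) :
  forall psi, hm psi <= H -> forall i i',
  Rel H (xd psi) (fun k => cls a (pi k)) (fun k => cls b (pi' k)) i i' ->
  (sat_p (Tn a) pi i psi <-> sat_p (Tn b) pi' i' psi).
Proof.
  induction psi as [f|q IHq|q IHq r IHr|q IHq|q IHq r IHr]; simpl; intros Hh i i' HR.
  - apply (IH f Hh a b (pi i) (pi' i') (Hn i) (Hn' i')).
    destruct HR as [p [p' [H1 [H2 [H3 H4]]]]].
    destruct p as [|p0], p' as [|p0'].
    + left. specialize (H3 0). rewrite !Nat.add_0_r in H3. exact H3.
    + lia.
    + lia.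
    + right. destruct (H1 0 ltac:(lia)) as [z [Ez Hz]]. destruct (H2 0 ltac:(lia)) as [z' [Ez' Hz']].
      rewrite Nat.add_0_r in Ez, Ez'. exists z, z'. repeat split; auto; lia.
  - specialize (IHq Hh i i' HR). tauto.
  - rewrite (IHq ltac:(lia) i i' (Rel_mono _ (xd q) (Nat.max (xd q) (xd r)) _ _ _ _ ltac:(lia) HR)).
    rewrite (IHr ltac:(lia) i i' (Rel_mono _ (xd r) (Nat.max (xd q) (xd r)) _ _ _ _ ltac:(lia) HR)). tauto.
  - apply IHq; auto. apply Rel_X. exact HR.
  - assert (Hq : hm q <= H) by lia. assert (Hr : hm r <= H) by lia.
    destruct HR as [p [p' [A [B [C D]]]]].
    split.
    + intros [j [Hij [Hrj Hqj]]].
      destruct (U_arith _ p p' (j - i) D) as [d' [HC Hk]].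
      exists (i' + d'). split; [lia|]. split.
      * assert (R1 := Rel_move H _ (fun k => cls a (pi k)) (fun k => cls b (pi' k)) i i' p p' _ _ A B C HC).
        replace (i + (j - i)) with j in R1 by lia.
        apply (IHr Hr j (i' + d')); auto. eapply Rel_mono; [|exact R1]. lia.
      * intros k' Hk'. destruct (Hk (k' - i') ltac:(lia)) as [kk [Hkk HCk]].
        assert (R1 := Rel_move H _ (fun k => cls a (pi k)) (fun k => cls b (pi' k)) i i' p p' _ _ A B C HCk).
        replace (i' + (k' - i')) with k' in R1 by lia.
        apply (IHq Hq (i + kk) k'); [eapply Rel_mono; [|exact R1]; lia|].
        apply Hqj. lia.
    + intros [j [Hij [Hrj Hqj]]].
      assert (D' : p' = p \/ (Nat.max (xd q) (xd r) < p' /\ Nat.max (xd q) (xd r) < p)) by lia.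
      destruct (U_arith _ p' p (j - i') D') as [d' [HC Hk]].
      exists (i + d'). split; [lia|]. split.
      * assert (R1 := Rel_move H _ (fun k => cls b (pi' k)) (fun k => cls a (pi k)) i' i p' p _ _ B A (fun k => eq_sym (C k)) HC).
        replace (i' + (j - i')) with j in R1 by lia.
        apply Rel_sym in R1.
        apply (IHr Hr (i + d') j); auto. eapply Rel_mono; [|exact R1]. lia.
      * intros k' Hk'. destruct (Hk (k' - i) ltac:(lia)) as [kk [Hkk HCk]].
        assert (R1 := Rel_move H _ (fun k => cls b (pi' k)) (fun k => cls a (pi k)) i' i p' p _ _ B A (fun k => eq_sym (C k)) HCk).
        replace (i + (k' - i)) with k' in R1 by lia.
        apply Rel_sym in R1.
        apply (IHq Hq k' (i' + kk)); [eapply Rel_mono; [|exact R1]; lia|].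
        apply Hqj. lia.
Qed.

Lemma path_cls a u (pi : nat -> list bool) : Tn_node a u -> is_path (Tn a) u pi ->
  (forall k, Tn_node a (pi k) /\ cls a (pi k) = cseq (cls a u) (fun k => last (pi (S k)) false) k) /\
  valid (cls a u) (fun k => last (pi (S k)) false).
Proof.
  intros Hu [H0 Hs].
  assert (A : forall k, Tn_node a (pi k) /\ cls a (pi k) = cseq (cls a u) (fun k => last (pi (S k)) false) k).
  { induction k as [|k [IHn IHc]].
    - rewrite H0. auto.
    - destruct (Hs k) as [d [E N]]. simpl in N. split; auto.
      simpl. rewrite E, last_last. rewrite <- IHc.
      destruct (child a (pi k) d IHn) as [_ C]. rewrite E in N. rewrite (C N). reflexivity. }
  split; auto.
  intros k. destruct (A k) as [N E]. destruct (Hs k) as [d [E2 N2]]. simpl in N2.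
  rewrite <- E. rewrite E2, last_last. rewrite E2 in N2.
  destruct (child a (pi k) d N) as [C _]. apply C. exact N2.
Qed.

Lemma build_path b (v : list bool) g : Tn_node b v -> valid (cls b v) g ->
  is_path (Tn b) v (fun k => v ++ map g (seq 0 k)) /\
  forall k, Tn_node b (v ++ map g (seq 0 k)) /\ cls b (v ++ map g (seq 0 k)) = cseq (cls b v) g k.
Proof.
  intros Hv Hg.
  assert (E : forall k, v ++ map g (seq 0 (S k)) = (v ++ map g (seq 0 k)) ++ [g k]).
  { intros k. rewrite seq_S, map_app, app_assoc. reflexivity. }
  assert (A : forall k, Tn_node b (v ++ map g (seq 0 k)) /\ cls b (v ++ map g (seq 0 k)) = cseq (cls b v) g k).
  { induction k as [|k [IHn IHc]].
    - simpl. rewrite app_nil_r. auto.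
    - rewrite E. destruct (child b _ (g k) IHn) as [C1 C2].
      assert (N : Tn_node b ((v ++ map g (seq 0 k)) ++ [g k])).
      { apply C1. rewrite IHc. apply Hg. }
      split; auto. simpl. rewrite <- IHc, (C2 N). reflexivity. }
  split; auto. split.
  - simpl. apply app_nil_r.
  - intros k. exists (g k). split; [apply E|]. exact (proj1 (A (S k))).
Qed.

Lemma cseq_shift c0 c1 d k : step c0 (d 0) = Some c1 ->
  cseq c0 d (S k) = cseq c1 (fun m => d (S m)) k.
Proof.
  intros E. induction k as [|k IH].
  - simpl. rewrite E. reflexivity.
  - change (cseq c0 d (S (S k))) with
      (match step (cseq c0 d (S k)) (d (S k)) with Some c => c | None => CO1 end).
    rewrite IH. reflexivity.
Qed.

Lemma valid_shift c0 c1 d : valid c0 d -> step c0 (d 0) = Some c1 -> valid c1 (fun m => d (S m)).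
Proof. intros V E k. rewrite <- (cseq_shift c0 c1 d k E). apply (V (S k)). Qed.

Lemma first_nonhigh H : forall x d, valid (CM x) d -> exists p,
  (forall j, j < p -> cseq (CM x) d j = CM (x - j) /\ H <= S (x - j) /\ j <= x) /\
  ((cseq (CM x) d p = CO0 /\ 1 <= p /\ p <= x) \/
   (p <= x /\ cseq (CM x) d p = CM (x - p) /\ S (x - p) < H) \/
   (p = S x /\ cseq (CM x) d p = CN)).
Proof.
  induction x as [|x IH]; intros d V.
  - destruct (le_lt_dec H 1).
    + exists 1. assert (V0 := V 0). simpl in V0.
      destruct (d 0) eqn:Ed; [contradiction|].
      split.
      * intros j Hj. assert (j = 0) by lia. subst. simpl. auto.
      * right; right. split; auto. simpl. rewrite Ed. reflexivity.
    + exists 0. split; [intros; lia|]. right; left. simpl. auto.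
  - destruct (le_lt_dec H (S (S x))).
    + assert (V0 := V 0). simpl in V0. destruct (d 0) eqn:Ed.
      * exists 1. split.
        -- intros j Hj. assert (j = 0) by lia. subst. simpl. auto with arith.
        -- left. simpl. rewrite Ed. repeat split; lia.
      * assert (S0 : step (CM (S x)) (d 0) = Some (CM x)) by (rewrite Ed; reflexivity).
        destruct (IH _ (valid_shift _ _ _ V S0)) as [p0 [P1 P2]].
        exists (S p0). split.
        -- intros [|j] Hj.
           ++ simpl. auto with arith.
           ++ rewrite (cseq_shift _ _ _ _ S0). destruct (P1 j ltac:(lia)) as [X1 [X2 X3]].
              simpl. repeat split; auto. lia.
        -- rewrite (cseq_shift _ _ _ _ S0). simpl.
           destruct P2 as [[X1 [X2 X3]]|[[X1 [X2 X3]]|[X1 X2]]].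
           ++ left. repeat split; auto; lia.
           ++ right; left. repeat split; auto; lia.
           ++ right; right. split; auto; lia.
    + exists 0. split; [intros; lia|]. right; left. simpl. repeat split; lia.
Qed.

Lemma glue c0 c0' d pre p p' : valid c0 d ->
  (forall m, m < p' -> step (cseq c0' pre m) (pre m) <> None) ->
  cseq c0' pre p' = cseq c0 d p ->
  let g := fun m => if m <? p' then pre m else d (p + (m - p')) in
  valid c0' g /\ (forall k, cseq c0' g (p' + k) = cseq c0 d (p + k)) /\
  (forall m, m <= p' -> cseq c0' g m = cseq c0' pre m).
Proof.
  intros V Vp E g.
  assert (A : forall m, m <= p' -> cseq c0' g m = cseq c0' pre m).
  { induction m as [|m IH]; intros Hm; [reflexivity|].
    simpl. rewrite IH by lia. unfold g.
    assert (L : (m <? p') = true) by (apply Nat.ltb_lt; lia). rewrite L. reflexivity. }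
  assert (G : forall k, g (p' + k) = d (p + k)).
  { intros k. unfold g. assert (L : (p' + k <? p') = false) by (apply Nat.ltb_ge; lia).
    rewrite L. f_equal. lia. }
  assert (B : forall k, cseq c0' g (p' + k) = cseq c0 d (p + k)).
  { induction k as [|k IH].
    - rewrite !Nat.add_0_r, A by lia. auto.
    - replace (p' + S k) with (S (p' + k)) by lia. replace (p + S k) with (S (p + k)) by lia.
      simpl. rewrite IH, G. reflexivity. }
  split; [|split; auto].
  intros m. destruct (le_lt_dec p' m).
  - replace m with (p' + (m - p')) by lia. rewrite B, G. apply V.
  - rewrite A by lia. unfold g. assert (L : (m <? p') = true) by (apply Nat.ltb_lt; lia). rewrite L. auto.
Qed.

Definition mainc x m := if m <=? x then CM (x - m) else CN.

Lemma main_run x pre : forall j, (forall m, m < j -> pre m = false) ->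
  forall m, m <= j -> cseq (CM x) pre m = mainc x m /\ (m < j -> step (cseq (CM x) pre m) (pre m) <> None).
Proof.
  intros j Hf. induction m as [|m IH]; intros Hm.
  - unfold mainc. simpl. rewrite Nat.sub_0_r. split; auto. intros L. rewrite Hf by auto.
    destruct x; discriminate.
  - destruct (IH ltac:(lia)) as [E1 _].
    assert (St : step (mainc x m) false = Some (mainc x (S m))).
    { unfold mainc. destruct (lt_eq_lt_dec m x) as [[L|L]|L].
      + assert (A1 : (m <=? x) = true) by (apply Nat.leb_le; lia).
        assert (A2 : (S m <=? x) = true) by (apply Nat.leb_le; lia). rewrite A1, A2.
        replace (x - m) with (S (x - S m)) by lia. reflexivity.
      + subst x. rewrite Nat.leb_refl, Nat.sub_diag.
        assert (A2 : (S m <=? m) = false) by (apply Nat.leb_gt; lia). rewrite A2. reflexivity.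
      + assert (A1 : (m <=? x) = false) by (apply Nat.leb_gt; lia).
        assert (A2 : (S m <=? x) = false) by (apply Nat.leb_gt; lia). rewrite A1, A2. reflexivity. }
    assert (E2 : cseq (CM x) pre (S m) = mainc x (S m)).
    { simpl. rewrite E1, Hf by lia. rewrite St. reflexivity. }
    split; auto. intros L. rewrite E2, Hf by lia.
    unfold mainc. destruct (S m <=? x); [destruct (x - S m)|]; discriminate.
Qed.

Lemma construct H xi x x' d : 1 <= H -> H + xi <= x -> H + xi <= x' -> valid (CM x) d ->
  exists g, valid (CM x') g /\ Rel H xi (cseq (CM x) d) (cseq (CM x') g) 0 0.
Proof.
  intros H1 Hx Hx' V.
  destruct (first_nonhigh H x d V) as [p [P1 P2]].
  assert (Hhigh : forall j, j < p -> high H (cseq (CM x) d j)).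
  { intros j Hj. destruct (P1 j Hj) as [X1 [X2 _]]. exists (x - j). auto. }
  destruct P2 as [[E0 [Hp1 Hp2]] | [[Hp [Ep Hlow]] | [Hp Ep]]].
  -
    assert (Hhp : H <= S (x - (p - 1))) by (destruct (P1 (p - 1) ltac:(lia)) as [_ [X _]]; exact X).
    set (L := Nat.min x' (x' + 2 - H)).
    set (p' := Nat.min p L).
    set (pre := fun m => m =? p' - 1).
    assert (Hpre : forall m, m < p' - 1 -> pre m = false) by (intros m Hm; apply Nat.eqb_neq; lia).
    assert (MR := main_run x' pre (p' - 1) Hpre).
    assert (Elast : cseq (CM x') pre (p' - 1) = CM (x' - (p' - 1))).
    { destruct (MR (p' - 1) ltac:(lia)) as [X _]. rewrite X. unfold mainc.
      assert (A1 : (p' - 1 <=? x') = true) by (apply Nat.leb_le; lia). rewrite A1. reflexivity. }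
    assert (Ep' : cseq (CM x') pre p' = CO0).
    { replace p' with (S (p' - 1)) at 1 by lia. simpl. rewrite Elast.
      assert (Pt : pre (p' - 1) = true) by (apply Nat.eqb_eq; reflexivity). rewrite Pt.
      replace (x' - (p' - 1)) with (S (x' - p')) by lia. reflexivity. }
    assert (Vp : forall m, m < p' -> step (cseq (CM x') pre m) (pre m) <> None).
    { intros m Hm. destruct (Nat.eq_dec m (p' - 1)).
      - subst m. rewrite Elast. assert (Pt : pre (p' - 1) = true) by (apply Nat.eqb_eq; reflexivity).
        rewrite Pt. replace (x' - (p' - 1)) with (S (x' - p')) by lia. discriminate.
      - apply (MR m); lia. }
    destruct (glue (CM x) (CM x') d pre p p' V Vp ltac:(rewrite Ep', E0; reflexivity)) as [Vg [Tg Pg]].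
    eexists. split; [exact Vg|].
    exists p, p'. repeat split.
    + intros j Hj. apply Hhigh. exact Hj.
    + intros j Hj. simpl. rewrite Pg by lia. destruct (MR j ltac:(lia)) as [X _]. rewrite X.
      unfold mainc. assert (A1 : (j <=? x') = true) by (apply Nat.leb_le; lia). rewrite A1.
      exists (x' - j). split; auto. lia.
    + intros k. exact (eq_sym (Tg k)).
    + lia.
  -
    assert (p <> 0) by (intros ->; lia).
    assert (Hhp : H <= S (x - (p - 1))) by (destruct (P1 (p - 1) ltac:(lia)) as [_ [X _]]; exact X).
    set (p' := x' + 2 - H).
    set (pre := fun _ : nat => false).
    assert (MR := main_run x' pre p' (fun _ _ => eq_refl)).
    assert (Ep' : cseq (CM x') pre p' = CM (x - p)).
    { destruct (MR p' ltac:(lia)) as [X _]. rewrite X. unfold mainc.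
      assert (A1 : (p' <=? x') = true) by (apply Nat.leb_le; lia). rewrite A1. f_equal. lia. }
    destruct (glue (CM x) (CM x') d pre p p' V (fun m Hm => proj2 (MR m ltac:(lia)) Hm)
      ltac:(rewrite Ep', Ep; reflexivity)) as [Vg [Tg Pg]].
    eexists. split; [exact Vg|].
    exists p, p'. repeat split.
    + intros j Hj. apply Hhigh. exact Hj.
    + intros j Hj. simpl. rewrite Pg by lia. destruct (MR j ltac:(lia)) as [X _]. rewrite X.
      unfold mainc. assert (A1 : (j <=? x') = true) by (apply Nat.leb_le; lia). rewrite A1.
      exists (x' - j). split; auto. lia.
    + intros k. exact (eq_sym (Tg k)).
    + lia.
  -
    set (p' := S x').
    set (pre := fun _ : nat => false).
    assert (MR := main_run x' pre p' (fun _ _ => eq_refl)).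
    assert (Ep' : cseq (CM x') pre p' = CN).
    { destruct (MR p' ltac:(lia)) as [X _]. rewrite X. unfold mainc.
      assert (A1 : (p' <=? x') = false) by (apply Nat.leb_gt; lia). rewrite A1. reflexivity. }
    destruct (glue (CM x) (CM x') d pre p p' V (fun m Hm => proj2 (MR m ltac:(lia)) Hm)
      ltac:(rewrite Ep', Ep; reflexivity)) as [Vg [Tg Pg]].
    eexists. split; [exact Vg|].
    exists p, p'. repeat split.
    + intros j Hj. apply Hhigh. exact Hj.
    + intros j Hj. simpl. rewrite Pg by lia. destruct (MR j ltac:(lia)) as [X _]. rewrite X.
      unfold mainc. assert (A1 : (j <=? x') = true) by (apply Nat.leb_le; lia). rewrite A1.
      exists (x' - j). split; auto.
      destruct (P1 x ltac:(lia)) as [_ [X2 _]]. lia.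
    + intros k. exact (eq_sym (Tg k)).
    + lia.
Qed.

Definition P s := forall f, size_s f <= s -> Q f.

Lemma step_simil s c c' d c1 : 1 <= s -> simil (S s) c c' -> step c d = Some c1 ->
  exists c1', step c' d = Some c1' /\ simil s c1 c1'.
Proof.
  intros Hs [<- | [z [z' [-> [-> [Hz Hz']]]]]] E.
  - exists c1. split; auto. left; auto.
  - destruct z as [|z]; [lia|]. destruct z' as [|z']; [lia|].
    destruct d; simpl in *; injection E as <-; eexists; split; try reflexivity.
    + left; auto.
    + right. exists z, z'. repeat split; lia.
Qed.

Lemma D_dir k g (IHg : Q g) : forall a b (u v : list bool), Tn_node a u -> Tn_node b v ->
  simil (S (size_s g)) (cls a u) (cls b v) ->
  sat_s (Tn a) u (SD k g) -> sat_s (Tn b) v (SD k g).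
Proof.
  intros a b u v Hu Hv Hs [ds [ND [Len All]]].
  exists ds. split; auto. split; auto.
  intros d Hd. destruct (All d Hd) as [N S].
  simpl in N.
  destruct (child a u d Hu) as [_ C]. specialize (C N).
  destruct (step_simil _ _ _ _ _ (size_s_pos g) Hs C) as [c1' [E' Sim]].
  destruct (child b v d Hv) as [C1 C2].
  assert (N' : Tn_node b (v ++ [d])) by (apply C1; rewrite E'; discriminate).
  split; [exact N'|].
  assert (E2 := C2 N'). rewrite E' in E2. injection E2 as E2.
  apply (IHg a b (u ++ [d]) (v ++ [d]) N N'); [rewrite E2 in Sim; exact Sim| exact S].
Qed.

Lemma E_dir s (IH : P s) psi : size_p psi <= s ->
  forall a b (u v : list bool), Tn_node a u -> Tn_node b v ->
  simil (S (size_p psi)) (cls a u) (cls b v) ->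
  sat_s (Tn a) u (SE psi) -> sat_s (Tn b) v (SE psi).
Proof.
  intros Hs a b u v Hu Hv Hsim [pi [Hp Hsat]].
  destruct (path_cls a u pi Hu Hp) as [Hcl Hval].
  set (d := fun k => last (pi (S k)) false) in *.
  assert (HxH := xd_hm psi). assert (H1 := hm_pos psi).
  assert (Hg : exists g, valid (cls b v) g /\
     Rel (hm psi) (xd psi) (cseq (cls a u) d) (cseq (cls b v) g) 0 0).
  { destruct Hsim as [Heq | [x [x' [Ex [Ex' [Hx Hx']]]]]].
    - exists d. rewrite <- Heq. split; auto. exists 0, 0. repeat split; intros; try lia.
    - rewrite Ex, Ex'. rewrite Ex in Hval. apply construct; auto; lia. }
  destruct Hg as [g [Hvg HR]].
  destruct (build_path b v g Hv Hvg) as [Hp' Hcl'].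
  exists (fun k => v ++ map g (seq 0 k)). split; [exact Hp'|].
  assert (HR' : Rel (hm psi) (xd psi) (fun k => cls a (pi k)) (fun k => cls b (v ++ map g (seq 0 k))) 0 0).
  { eapply Rel_ext; [| | exact HR]; intros k; simpl.
    - symmetry; apply Hcl.
    - symmetry; apply Hcl'. }
  refine (proj1 (path_lemma (hm psi) _ a b pi _ _ _ psi _ 0 0 HR') Hsat).
  - intros f Hf. apply IH. lia.
  - intros k. apply Hcl.
  - intros k. apply Hcl'.
  - lia.
Qed.

Lemma allP : forall s, P s.
Proof.
  induction s as [|s IH].
  - intros f Hf. pose proof (size_s_pos f). lia.
  - intros f Hf a b u v Hu Hv Hs. destruct f as [| x | g | g h | psi | k g]; simpl in Hf.
    + simpl. tauto.
    + destruct x. simpl. rewrite (lab_cls a u Hu), (lab_cls b v Hv).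
      destruct Hs as [E | [z [z' [E1 [E2 _]]]]].
      * rewrite E. tauto.
      * rewrite E1, E2. split; discriminate.
    + simpl. rewrite (IH g ltac:(lia) a b u v Hu Hv); [tauto|].
      eapply simil_mono; [|exact Hs]. simpl. lia.
    + simpl. rewrite (IH g ltac:(lia) a b u v Hu Hv), (IH h ltac:(lia) a b u v Hu Hv); [tauto| |];
      eapply simil_mono; try exact Hs; simpl; lia.
    + split.
      * apply (E_dir s IH psi ltac:(lia) a b u v Hu Hv Hs).
      * apply (E_dir s IH psi ltac:(lia) b a v u Hv Hu (simil_sym _ _ _ Hs)).
    + assert (Qg : Q g) by (apply IH; lia).
      split.
      * apply (D_dir k g Qg a b u v Hu Hv Hs).
      * apply (D_dir k g Qg b a v u Hv Hu (simil_sym _ _ _ Hs)).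
Qed.

Theorem lemma23 : forall (n : nat) (phi : sform unit),
  1 <= n -> wf_s phi -> size_s phi <= n ->
  (models (Tn n) phi <-> models (Tn (S n)) phi).
Proof.
  intros n phi _ _ Hs. unfold models.
  apply (allP n phi Hs n (S n) [] [] (root_node n) (root_node (S n))).
  rewrite !root_cls. right. exists (S n), (S (S n)). repeat split; lia.
Qed.
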